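(* Let $b>0$ and $N_{\rm r}\ge 1$, and let $x_1,\dots,x_{N_{\rm r}}\in\mathbb{C}$ be inputs satisfying $|\Re(x_k)|\le b$ and $|\Im(x_k)|\le b$ for all $k$. Define the first-order 1-bit spatial sigma-delta recursion with zero feedback phase shift (steering angle $\psi=0$) by $e_0=0$ and, for $n=1,\dots,N_{\rm r}$, $$r_n = x_n - e_{n-1},\qquad y_n=\mathcal{Q}_b[r_n],\qquad e_n = y_n - r_n,$$ where $\mathcal{Q}_b[u]=b\,\mathrm{sign}(\Re(u))+\jmath\, b\,\mathrm{sign}(\Im(u))$. Then for every $n=1,\dots,N_{\rm r}$, $$\Re(e_n) = b - 2b\left\langle \tfrac{1}{2}(n-1) + \tfrac{1}{2b}\sum_{k=1}^{n}\Re(x_k)\right\rangle,\qquad \Im(e_n) = b - 2b\left\langle \tfrac{1}{2}(n-1) + \tfrac{1}{2b}\sum_{k=1}^{n}\Im(x_k)\right\rangle,$$ where $\langle u\rangle = u-\lfloor u\rfloor$ denotes the fractional part of a real number $u$.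
   Context: $\jmath=\sqrt{-1}$. The function $\mathrm{sign}:\mathbb{R}\to\{-1,1\}$ is taken with the convention $\mathrm{sign}(u)=1$ for $u\ge 0$ and $\mathrm{sign}(u)=-1$ for $u<0$. In the paper the inputs $x_n$ are the antenna signals after an amplitude clipper with clipping level $c$; for steering angle $\psi=0$ the paper's overload condition $c=b(2-|\cos\varphi|-|\sin\varphi|)$ with $\varphi=0$ gives $c=b$, so the (clipped) inputs have real and imaginary parts bounded in absolute value by $b$. The quantity $e_n$ is the quantization error of channel (antenna) $n$, fed back to the input of channel $n+1$. *)

(* Defs.v *)
From Stdlib Require Import Reals Lra.
From Coquelicot Require Import Coquelicot.
Open Scope R_scope.

Definition sgn (u : R) : R := if Rle_dec 0 u then 1 else -1.

Definition Qb (b : R) (u : C) : C := (b * sgn (Re u), b * sgn (Im u)).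

(* Quantization error e_n of the first-order spatial sigma-delta recursion
   with psi = 0:  e_0 = 0, r_n = x_n - e_{n-1}, y_n = Q_b[r_n], e_n = y_n - r_n.
   Inputs are indexed x 1, x 2, ..., x N_r. *)
Fixpoint sd_err (b : R) (x : nat -> C) (n : nat) : C :=
  match n with
  | O => 0%C
  | S m =>
      let r := (x (S m) - sd_err b x m)%C in
      let y := Qb b r in
      (y - r)%C
  end.

Definition fracp (u : R) : R := u - IZR (Int_part u).

(* Main.v *)
Require Import Defs.
From Stdlib Require Import Reals Lra Lia.
From Coquelicot Require Import Coquelicot.
Open Scope R_scope.

Lemma fracp_char (u : R) (z : Z) : IZR z <= u < IZR z + 1 -> fracp u = u - IZR z.
Proof.
  intros [H1 H2]. unfold fracp, Int_part.
  assert (E : (z + 1)%Z = up u).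
  { apply tech_up; rewrite plus_IZR; simpl; lra. }
  rewrite <- E. rewrite minus_IZR, plus_IZR. simpl. lra.
Qed.

Lemma fracp_bounds (u : R) : 0 <= fracp u < 1 /\ fracp u = u - IZR (Int_part u).
Proof.
  unfold fracp. destruct (base_Int_part u). lra.
Qed.

Lemma gen (b : R) (Nr : nat) (a e : nat -> R) :
  0 < b ->
  (forall k : nat, (1 <= k <= Nr)%nat -> Rabs (a k) <= b) ->
  e O = 0 ->
  (forall m, e (S m) = b * sgn (a (S m) - e m) - (a (S m) - e m)) ->
  forall n : nat, (n <= Nr)%nat ->
    e n = b - 2 * b * fracp (/ 2 * (INR n - 1) + / (2 * b) * sum_n_m a 1 n).
Proof.
  intros Hb Ha He0 HeS n. induction n as [|m IH]; intros Hn.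
  - rewrite He0, sum_n_m_zero by lia. simpl.
    unfold zero; simpl; rewrite (fracp_char _ (-1)%Z); simpl; lra.
  - assert (IH' := IH ltac:(lia)).
    set (S' := / 2 * (INR m - 1) + / (2 * b) * sum_n_m a 1 m) in IH'.
    destruct (fracp_bounds S') as [Hf Hfe].
    set (f := fracp S') in *. set (z := Int_part S') in *.
    assert (Hs : sum_n_m a 1 (S m) = sum_n_m a 1 m + a (S m)).
    { rewrite sum_n_Sm by lia. reflexivity. }
    rewrite Hs, S_INR.
    set (c := a (S m) / (2 * b)).
    assert (Hac : a (S m) = 2 * b * c) by (unfold c; field; lra).
    assert (HaS := Ha (S m) ltac:(lia)).
    rewrite Hac in HaS. apply Rabs_le_between in HaS.
    assert (Hc : -1/2 <= c <= 1/2) by (split; nra).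
    assert (Heq : / 2 * (INR m + 1 - 1) + / (2 * b) * (sum_n_m a 1 m + a (S m))
                  = S' + / 2 + c).
    { unfold S', c. field. lra. }
    rewrite Heq, HeS, IH'. rewrite Hac.
    unfold sgn. destruct (Rle_dec 0 (2 * b * c - (b - 2 * b * f))) as [Hr|Hr].
    + assert (1 <= f + /2 + c) by nra.
      assert (ES : S' = f + IZR z) by lra. rewrite ES.
      rewrite (fracp_char _ (z + 1)%Z); rewrite ?plus_IZR; [|lra].
      clearbody f z c S'. field.
    + assert (f + /2 + c < 1) by nra.
      assert (ES : S' = f + IZR z) by lra. rewrite ES.
      rewrite (fracp_char _ z); [|lra].
      clearbody f z c S'. field.
Qed.

Theorem lemma1 (b : R) (Nr : nat) (x : nat -> C) :
  0 < b -> (1 <= Nr)%nat ->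
  (forall k : nat, (1 <= k <= Nr)%nat ->
     Rabs (Re (x k)) <= b /\ Rabs (Im (x k)) <= b) ->
  forall n : nat, (1 <= n <= Nr)%nat ->
    Re (sd_err b x n)
      = b - 2 * b * fracp (/ 2 * (INR n - 1)
                           + / (2 * b) * sum_n_m (fun k => Re (x k)) 1 n) /\
    Im (sd_err b x n)
      = b - 2 * b * fracp (/ 2 * (INR n - 1)
                           + / (2 * b) * sum_n_m (fun k => Im (x k)) 1 n).
Proof.
  intros Hb HN Hx n Hn. split.
  - apply (gen b Nr (fun k => Re (x k)) (fun k => Re (sd_err b x k))).
    + exact Hb.
    + intros k Hk. apply (Hx k Hk).
    + reflexivity.
    + intros m. reflexivity.
    + lia.
  - apply (gen b Nr (fun k => Im (x k)) (fun k => Im (sd_err b x k))).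
    + exact Hb.
    + intros k Hk. apply (Hx k Hk).
    + reflexivity.
    + intros m. reflexivity.
    + lia.
Qed.
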